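(* Let $\mathcal{O}=\mathcal{F}_\mathcal{M}/(\mathcal{G})$ be a shuffle operad with monomial relations $\mathcal{G}$, and assume that for every tree monomial $T$ the set of divisors of $T$ that are relations admits an Anick numbering $S_1,\dots,S_p$, which we fix. Then for each tree monomial $T$, a basis of $H^Q_T(\mathcal{O})$ is in one-to-one correspondence with the basis elements $v$ of $(\mathcal{A}_\mathcal{G})^{ab}_T$ for which the following two properties hold: (I) for each $S_j$ present in $v$, $\partial_j(v)$ is decomposable (i.e. equals $0$ in $(\mathcal{A}_\mathcal{G})^{ab}$); (II) for each $S_j$ not present in $v$, there exists $i<j$ such that $\partial_i(v\wedge S_j)$ is indecomposable (i.e. nonzero in $(\mathcal{A}_\mathcal{G})^{ab}$).
   Context: $\mathcal{F}_\mathcal{M}$ is the free shuffle operad on a collection $\mathcal{M}$ over a field; it has a basis of tree monomials. A divisor of a tree monomial $T$ is an occurrence in $T$ of a subtree containing, with each vertex, all its incoming and outgoing edges; it determines a tree monomial by keeping decorations and relabelling leaves in order of the smallest leaf of $T$ reachable through them; it is a relation if this tree monomial lies in $\mathcal{G}$. An Anick numbering of the divisors of $T$ that are relations is a numbering $S_1,\dots,S_p$ such that whenever $i<j<k$ and $S_i\cap S_j\ne\varnothing$ we have $S_i\cap S_k\subset S_j\cap S_k$ (naive intersections of subtrees in $T$). For a tree monomial $T$ with relation divisors $S_1,\dots,S_p$, consider the elements $T\otimes S_{i_1}\wedge\cdots\wedge S_{i_q}$ of $\mathbb{k}T\otimes\Lambda(S_1,\dots,S_p)$ (exterior algebra, $S_i$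 of degree $1$), with the degree $-1$ derivations $\partial_i$, $\partial_i(S_j)=\delta_{ij}$. Such an element is indecomposable if every edge of $T$ joining two internal vertices of $T$ joins two internal vertices of at least one of $S_{i_1},\dots,S_{i_q}$, and decomposable otherwise. $(\mathcal{A}_\mathcal{G})^{ab}_T$ is the chain complex with basis the indecomposable elements with underlying tree monomial $T$ (these are the indecomposable generators of the free dg shuffle operad resolution $\mathcal{A}_\mathcal{G}$ of $\mathcal{O}$ with underlying tree $T$) and differential $\sum_i\bar\partial_i$, where $\bar\partial_i(v)=\partial_i(v)$ if $\partial_i(v)$ is indecomposable and $\bar\partial_i(v)=0$ otherwise; $H^Q_T(\mathcal{O})$ denotes its homology (the $T$-component of the Quillen homology of $\mathcal{O}$, which is the direct sum of these over all $T$). *)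

(* Defs.v *)
From HB Require Import structures.
From mathcomp Require Import all_boot all_order all_algebra.
Set Implicit Arguments. Unset Strict Implicit. Unset Printing Implicit Defensive.
Import GRing.Theory.
Local Open Scope ring_scope.

(* The collection M is given by a basis: a type [Gen] of generators,    *)
(* each with an arity.  A tree monomial is a rooted planar tree whose   *)
(* internal vertices are decorated by generators (with as many          *)
(* children as the arity) and whose leaves carry labels 1..n, subject   *)
(* to the shuffle condition (minimal leaves of the children of every    *)
(* vertex increase from left to right).                                 *)

Inductive tmon (Gen : Type) : Type :=
| TLeaf of nat
| TNode of Gen & seq (tmon Gen).
Arguments TLeaf {Gen}.
Arguments TNode {Gen}.

Section TreeMonomials.
Variable Gen : Type.
Implicit Types (t : tmon Gen).

Fixpoint leaves t : seq nat :=
  match t with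
  | TLeaf n => [:: n]
  | TNode _ ts => flatten (map leaves ts)
  end.

Definition minleaf t : nat := let l := leaves t in foldr minn (head 0%N l) l.

Fixpoint wf_shape (arity : Gen -> nat) t : bool :=
  match t with
  | TLeaf _ => true
  | TNode g ts => [&& arity g == size ts, all (wf_shape arity) ts
                    & sorted ltn (map minleaf ts)]
  end.

Definition wf_tmon (arity : Gen -> nat) t : bool :=
  wf_shape arity t && perm_eq (leaves t) (iota 1 (size (leaves t))).

Fixpoint nodes t : seq (seq nat) :=
  match t with
  | TLeaf _ => [::]
  | TNode _ ts =>
      [::] :: (fix aux (i : nat) (ts : seq (tmon Gen)) : seq (seq nat) :=
                 match ts with
                 | [::] => [::]
                 | c :: ts' => map (cons i) (nodes c) ++ aux i.+1 ts'
                 end) 0%N ts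
  end.

Fixpoint subtree_at t (p : seq nat) : option (tmon Gen) :=
  match p with
  | [::] => Some t
  | i :: p' => match t with
               | TLeaf _ => None
               | TNode _ ts => if onth ts i is Some c then subtree_at c p' else None
               end
  end.

Definition nnodes t := size (nodes t).
Definition vpos t (v : 'I_(nnodes t)) : seq nat := nth [::] (nodes t) v.

Definition iedge t (u v : 'I_(nnodes t)) : bool :=
  (vpos v != [::]) && (vpos u == take (size (vpos v)).-1 (vpos v)).

(* A divisor: a nonempty connected set of internal vertices (taken with *)
(* all their incoming and outgoing edges); connected = exactly one      *)
(* vertex of D has no parent in D.                                      *)
Definition is_top t (D : {set 'I_(nnodes t)}) v :=
  (v \in D) && ~~ [exists u in D, iedge u v].

Definition is_divisor t (D : {set 'I_(nnodes t)}) : bool :=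
  #|[set v | is_top D v]| == 1%N.

Fixpoint extract (inD : pred (seq nat)) t (p : seq nat) {struct t} : tmon Gen :=
  match t with
  | TLeaf n => TLeaf n
  | TNode g ts =>
      TNode g ((fix aux (i : nat) (ts : seq (tmon Gen)) : seq (tmon Gen) :=
                  match ts with
                  | [::] => [::]
                  | c :: ts' =>
                      (if inD (rcons p i) then extract inD c (rcons p i)
                       else TLeaf (minleaf c)) :: aux i.+1 ts'
                  end) 0%N ts)
  end.

Fixpoint relabel (f : nat -> nat) t : tmon Gen :=
  match t with
  | TLeaf n => TLeaf (f n)
  | TNode g ts => TNode g (map (relabel f) ts)
  end.

(* keep decorations, relabel leaves in the order of the smallest leaf of *)
(* t reachable through them (labels 1..k)                               *)
Definition divisor_monomial t (D : {set 'I_(nnodes t)}) : tmon Gen :=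
  let ptop := if [pick v | is_top D v] is Some v then vpos v else [::] in
  let inD := fun q : seq nat => [exists v in D, vpos v == q] in
  let e := extract inD (odflt (TLeaf 0%N) (subtree_at t ptop)) ptop in
  relabel (fun x => (count (fun y => y < x)%N (leaves e)).+1) e.

Definition relation_divisor (G : tmon Gen -> Prop) t (D : {set 'I_(nnodes t)}) : Prop :=
  is_divisor D /\ G (divisor_monomial D).

Definition relation_numbering (G : tmon Gen -> Prop) t (S : seq {set 'I_(nnodes t)}) : Prop :=
  uniq S /\ forall D, D \in S <-> relation_divisor G D.

Definition anick t (S : seq {set 'I_(nnodes t)}) : Prop :=
  forall i j k : nat, (i < j)%N -> (j < k)%N -> (k < size S)%N ->
    nth set0 S i :&: nth set0 S j != set0 ->
    nth set0 S i :&: nth set0 S k \subset nth set0 S j :&: nth set0 S k.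

(* The complex (A_G)^ab_T.  An element T (x) S_{i1} /\ ... /\ S_{iq}     *)
(* (i1 < ... < iq) is encoded by the set I = {i1,...,iq} of indices.    *)

Section Complex.
Variable t : tmon Gen.
Variable S : seq {set 'I_(nnodes t)}.
Local Notation p := (size S).
Definition Sd (i : 'I_p) : {set 'I_(nnodes t)} := nth set0 S i.

Definition indec (I : {set 'I_p}) : bool :=
  [forall u, forall v, iedge u v ==> [exists i in I, (u \in Sd i) && (v \in Sd i)]].

Definition indecs : {set {set 'I_p}} := [set I | indec I].

(* coefficient of J in sum_i dbar_i (I), for I, J indecomposable:       *)
(* d_i(S_{i1}/\.../\S_{iq}) = (-1)^(k-1) (... omit S_{ik} ...) if i = ik *)
Definition dcoef (F : fieldType) (I J : {set 'I_p}) : F :=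
  \sum_(i in I | J == I :\ i) (-1) ^+ #|[set j in I | (j < i)%N]|.

Definition dmatrix (F : fieldType) : 'M[F]_(#|indecs|, #|indecs|) :=
  \matrix_(a, b) dcoef F (enum_val a) (enum_val b).

(* dimension of the homology H^Q_T(O) = ker d / im d  (row-vector convention) *)
Definition homology_dim (F : fieldType) : nat :=
  (\rank (kermx (dmatrix F)) - \rank (dmatrix F))%N.

Definition propI (I : {set 'I_p}) : bool :=
  [forall j in I, ~~ indec (I :\ j)].

(* property (II): for S_j not in v, some i < j with d_i(v /\ S_j) nonzero *)
(* in the abelianization, i.e. i in I and (I u {j}) \ {i} indecomposable   *)
Definition propII (I : {set 'I_p}) : bool :=
  [forall j in ~: I, [exists i in I, (i < j)%N && indec ((j |: I) :\ i)]].

Definition critical : {set {set 'I_p}} := [set I in indecs | propI I && propII I].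

End Complex.
End TreeMonomials.

(* Main.v *)
From HB Require Import structures.
From mathcomp Require Import all_boot all_order all_algebra.
From mathcomp Require Import zify.
Require Import Defs.
Set Implicit Arguments. Unset Strict Implicit. Unset Printing Implicit Defensive.
Import GRing.Theory.
Local Open Scope ring_scope.

Section Morse.
Variables (F : fieldType) (n : nat) (D : 'M[F]_n).
Variables (crit up : pred 'I_n) (mate : 'I_n -> 'I_n) (lev : 'I_n -> nat).
Hypothesis DD : D *m D = 0.
Hypothesis H1 : forall a b, crit a -> D a b = 0.
Hypothesis H2 : forall a, ~~ crit a ->
  [/\ mate (mate a) = a, up (mate a) = ~~ up a & ~~ crit (mate a)].
Hypothesis H3 : forall u, ~~ crit u -> up u -> D u (mate u) != 0.
Hypothesis H4 : forall u b, ~~ crit u -> up u -> D u b != 0 -> b != mate u ->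
  ~~ crit b -> ~~ up b -> (lev (mate u) < lev b)%N.

Let Us := [set u | ~~ crit u && up u].
Let Ls := [set u | ~~ crit u && ~~ up u].
Let Cs := [set u | crit u].

Lemma card_UL : #|Us| = #|Ls|.
Proof.
have inj : {in Us &, injective mate}.
  move=> a b; rewrite !inE => /andP[ca _] /andP[cb _] e.
  by have [<- _ _] := H2 ca; have [<- _ _] := H2 cb; rewrite e.
rewrite -(card_in_imset inj); suff -> : mate @: Us = Ls by [].
apply/setP=> x; apply/imsetP/idP.
  case=> y; rewrite !inE => /andP[cy uy] ->; have [_ -> ->] := H2 cy.
  by rewrite uy.
rewrite inE => /andP[cx ux]; have [mm um cm] := H2 cx.
by exists (mate x); rewrite // inE cm um ux.
Qed.

Lemma card_ULC : n = (#|Us| + #|Ls| + #|Cs|)%N.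
Proof.
rewrite -{1}(card_ord n) -(cardsT 'I_n).
have -> : [set: 'I_n] = (Us :|: Ls) :|: Cs.
  by apply/setP=> x; rewrite !inE; case: (crit x); case: (up x).
rewrite cardsU (_ : (Us :|: Ls) :&: Cs = set0) ?cards0 ?subn0; last first.
  by apply/setP=> x; rewrite !inE; case: (crit x); case: (up x).
rewrite cardsU (_ : Us :&: Ls = set0) ?cards0 ?subn0 //.
by apply/setP=> x; rewrite !inE; case: (crit x); case: (up x).
Qed.

Let f : 'I_#|Us| -> 'I_n := enum_val.
Let R : 'M[F]_(#|Us|, n) := \matrix_(k, j) D (f k) j.

Lemma fU k : ~~ crit (f k) && up (f k).
Proof. by have := enum_valP k; rewrite inE. Qed.

Lemma R_free : row_free R.
Proof.
apply: inj_row_free => x x0; apply/rowP=> k0; rewrite mxE.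
apply/eqP/negPn/negP=> nz.
pose P := [pred k | x 0 k != 0].
have Pk0 : P k0 by [].
case: (arg_minnP (fun k => lev (mate (f k))) Pk0) => k Pk kmin.
have := congr1 (fun v : 'rV[F]_n => v 0 (mate (f k))) x0; rewrite mxE [RHS]mxE.
rewrite (bigD1 k) //= big1 ?addr0; last first.
  move=> k' nk'; rewrite mxE; have [->|xk'] := eqVneq (x 0 k') 0; first by rewrite mul0r.
  have [->|Dnz] := eqVneq (D (f k') (mate (f k))) 0; first by rewrite mulr0.
  have /andP[ck' uk'] := fU k'; have /andP[ck uk] := fU k.
  have [mk umk cmk] := H2 ck.
  have ne : mate (f k) != mate (f k').
    apply: contra nk' => /eqP e; apply/eqP; apply: enum_val_inj.
    have [mk' _ _] := H2 ck'.
    by rewrite -/(f k') -/(f k) -mk' -e mk.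
  have := H4 ck' uk' Dnz; rewrite ne cmk umk uk => /(_ isT isT isT).
  by have := kmin k' xk'; rewrite leqNgt => /negbTE ->.
rewrite mxE; move/eqP; rewrite mulf_eq0 (negbTE Pk) /=.
by have /andP[ck uk] := fU k; rewrite (negbTE (H3 ck uk)).
Qed.

Lemma rowU u : ~~ crit u -> up u -> (row u D <= R)%MS.
Proof.
move=> cu uu; have uU : u \in Us by rewrite inE cu uu.
have -> : row u D = row (enum_rank_in uU u) R.
  by apply/rowP=> j; rewrite !mxE /f enum_rankK_in.
exact: row_sub.
Qed.

Lemma row_step a : (forall b, (lev a < lev b)%N -> (row b D <= R)%MS) -> (row a D <= R)%MS.
Proof.
move=> IH.
case ca: (crit a).
  rewrite (_ : row a D = 0) ?sub0mx //; by apply/rowP=> j; rewrite !mxE H1.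
case ua: (up a); first exact: rowU (negbT ca) ua.
have [mm um cm] := H2 (negbT ca).
set u := mate a; have uu : up u by rewrite /u um ua.
have ru : row u D *m D = 0 by rewrite -row_mul DD; apply/rowP=> j; rewrite !mxE.
move: ru; rewrite mulmx_sum_row (bigD1 a) //= => ru.
have Dua : row u D 0 a != 0 by (rewrite mxE; have := H3 cm uu; rewrite /u mm).
set c := row u D 0 a in ru Dua *.
set Sm := \sum_(b | b != a) row u D 0 b *: row b D in ru *.
have -> : row a D = - c^-1 *: Sm.
  have e : c *: row a D = - Sm by rewrite -[c *: _](addrK Sm) ru sub0r.
  by rewrite scaleNr -scalerN -e scalerA mulVf // scale1r.
apply: scalemx_sub; apply: summx_sub => b nba.
have [->|Dub] := eqVneq (row u D 0 b) 0.
  by rewrite scale0r; exact: sub0mx.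
apply: scalemx_sub.
case cb: (crit b).
  rewrite (_ : row b D = 0) ?sub0mx //; by apply/rowP=> j; rewrite !mxE H1.
case ub: (up b); first exact: rowU (negbT cb) ub.
rewrite mxE in Dub.
apply: IH; have := H4 cm uu Dub; rewrite /u mm nba cb ub; exact.
Qed.

Lemma D_sub : (D <= R)%MS.
Proof.
apply/row_subP.
pose N := \max_(b : 'I_n) lev b.
have levN b : (lev b <= N)%N by apply: (leq_bigmax b).
suff H : forall k a, (N - lev a <= k)%N -> (row a D <= R)%MS.
  by move=> a; exact: (H _ a (leqnn _)).
elim=> [|k IH] a hk; apply: row_step => b lt.
  by have := levN b; move: hk lt; lia.
by apply: IH; have := levN b; move: hk lt; lia.
Qed.

Lemma morse_rank : (\rank (kermx D) - \rank D)%N = #|Cs|.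
Proof.
have rR : \rank R = #|Us|.
  by apply/eqP; rewrite eqn_leq rank_leq_row row_leq_rank R_free.
have rD : \rank D = #|Us|.
  apply/eqP; rewrite eqn_leq -{1}rR (mxrankS D_sub) -rR mxrankS //.
  by apply/row_subP=> k; apply: (submx_trans _ (row_sub (f k) D)); rewrite (_ : row k R = row (f k) D) //; apply/rowP=> j; rewrite !mxE.
rewrite mxrank_ker rD {1}card_ULC -card_UL; lia.
Qed.
End Morse.

Section Comb.
Variables (Gen : Type) (t : tmon Gen) (S : seq {set 'I_(nnodes t)}).
Local Notation p := (size S).
Local Notation ind := (@indec _ _ S).
Local Notation Sd := (@Sd _ _ S).
Implicit Types (I J : {set 'I_p}) (i j k : 'I_p).

Lemma indecP I : reflect (forall u v, iedge u v -> exists2 i, i \in I & (u \in Sd i) && (v \in Sd i)) (ind I).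
Proof.
apply: (iffP forallP) => [H u v e|H u].
  by have /forallP/(_ v)/implyP/(_ e)/existsP[i /andP[iI h]] := H u; exists i.
apply/forallP=> v; apply/implyP=> e; have [i iI h] := H u v e.
by apply/existsP; exists i; rewrite iI.
Qed.

Lemma indec_sub I J : I \subset J -> ind I -> ind J.
Proof.
move=> sIJ /indecP H; apply/indecP=> u v e; have [i iI h] := H u v e.
by exists i => //; apply: (subsetP sIJ).
Qed.

Lemma nindecP I : ~~ ind I -> exists u, exists v, iedge u v /\
  forall i, i \in I -> ~~ ((u \in Sd i) && (v \in Sd i)).
Proof.
move=> nI; case: (boolP [exists u, exists v, iedge u v && [forall i in I, ~~ ((u \in Sd i) && (v \in Sd i))]]).
  case/existsP=> u /existsP[v /andP[e /forallP H]]; exists u, v; split=> // i iI.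
  by have /implyP := H i; apply.
move/existsPn=> H; case/negP: nI; apply/indecP=> u v e.
have /existsPn/(_ v) := H u; rewrite e /= => /forallPn[i].
by rewrite negb_imply negbK => /andP[iI h]; exists i.
Qed.

Hypothesis hA : anick S.

Lemma anickE (i j k : 'I_p) x u : (i < j)%N -> (j < k)%N -> x \in Sd i -> x \in Sd j ->
  u \in Sd i -> u \in Sd k -> u \in Sd j.
Proof.
move=> ij jk xi xj ui uk.
have ne : nth set0 S i :&: nth set0 S j != set0.
  by apply/set0Pn; exists x; rewrite inE xi xj.
have /subsetP/(_ u) := hA ij jk (ltn_ord k) ne.
by rewrite !inE => /(_ (introT andP (conj ui uk)))/andP[].
Qed.

Definition Qset (I : {set 'I_p}) : {set 'I_p} :=
  [set j : 'I_p | if j \in I then ind (I :\ j)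
                  else [forall i in I, (i < j)%N ==> ~~ ind ((j |: I) :\ i)]].

Definition Qo I : option 'I_p := [pick j in Qset I | [forall k in Qset I, (j <= k)%N]].

Lemma QoSome I j : Qo I = Some j -> j \in Qset I /\ forall k, k \in Qset I -> (j <= k)%N.
Proof.
rewrite /Qo; case: pickP => // j' /andP[jQ /forallP H] [<-]; split=> // k kQ.
by have /implyP := H k; apply.
Qed.

Lemma QoNone I : Qo I = None -> Qset I = set0.
Proof.
rewrite /Qo; case: pickP => // H _; apply/setP=> j; rewrite in_set0.
apply/negP=> jQ.
case: (arg_minnP (fun k : 'I_p => val k) jQ) => m mQ mmin.
have mQ' : m \in Qset I := mQ.
move/negbT: (H m); rewrite /= mQ' /= => /negP; apply; apply/forallP=> k; apply/implyP.
exact: mmin.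
Qed.

Lemma Qo_char I j : j \in Qset I -> (forall k, k \in Qset I -> (j <= k)%N) -> Qo I = Some j.
Proof.
move=> jQ jmin; case e: (Qo I) => [j'|].
  have [j'Q j'min] := QoSome e; congr Some; apply/val_inj/eqP.
  by rewrite eqn_leq j'min // jmin.
by have := QoNone e; move/setP/(_ j); rewrite jQ inE.
Qed.

Lemma inQset I j : (j \in Qset I) = (if j \in I then ind (I :\ j)
                  else [forall i in I, (i < j)%N ==> ~~ ind ((j |: I) :\ i)]).
Proof. by rewrite inE. Qed.

Lemma QsetOut I j i : j \notin I -> j \in Qset I -> i \in I -> (i < j)%N -> ~~ ind ((j |: I) :\ i).
Proof.
rewrite inQset => /negbTE -> /forallP H iI lt.
by have /implyP/(_ iI)/implyP/(_ lt) := H i.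
Qed.

Lemma QsetOutI I j : j \notin I -> (forall i, i \in I -> (i < j)%N -> ~~ ind ((j |: I) :\ i)) ->
  j \in Qset I.
Proof.
move=> jI H; rewrite inQset (negbTE jI); apply/forallP=> i; apply/implyP=> iI.
by apply/implyP; apply: H.
Qed.

Lemma M1 I j : ind I -> Qo I = Some j -> j \notin I ->
  ind (j |: I) /\ Qo (j |: I) = Some j.
Proof.
move=> iI /QoSome[jQ jmin] jI.
have iJ : ind (j |: I) by apply: indec_sub iI; apply: subsetUr.
split=> //; apply: Qo_char.
  by rewrite inQset setU11 setU1K.
move=> k kQ; rewrite leqNgt; apply/negP=> lt.
move: kQ; rewrite inQset; case: ifP => kJ.
  have kI : k \in I by move: kJ; rewrite in_setU1 => /orP[/eqP e|//]; move: lt; rewrite e ltnn.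
  by move=> H; have := QsetOut jI jQ kI lt; rewrite H.
move=> /forallP H.
have : k \in Qset I.
  apply: QsetOutI; first by apply: contraFN kJ; rewrite in_setU1 => ->; rewrite orbT.
  move=> i iI0 ik; have /implyP/(_ (setU1r _ iI0))/implyP/(_ ik) := H i.
  apply: contra; apply: indec_sub; apply/subsetP=> x; rewrite !(in_setD1, in_setU1).
  by case/andP=> -> /orP[->|->]; rewrite ?orbT.
by move/jmin; rewrite leqNgt lt.
Qed.

Lemma covP I u v : ind I -> iedge u v -> exists2 m, m \in I & (u \in Sd m) && (v \in Sd m).
Proof. by move/indecP; apply. Qed.

Lemma M2 I j : j \notin I -> ind (j |: I) -> Qo (j |: I) = Some j ->
  ind I /\ Qo I = Some j.
Proof.
move=> jI indJ /QoSome[jQ jmin].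
have iI : ind I by move: jQ; rewrite inQset setU11 setU1K.
split=> //.
have nJ i : i \in j |: I -> (i < j)%N -> ~~ ind ((j |: I) :\ i).
  move=> iJi lt; apply/negP=> h; have : i \in Qset (j |: I) by rewrite inQset iJi.
  by move/jmin; rewrite leqNgt lt.
apply: Qo_char.
  by apply: QsetOutI => // i iI0 lt; apply: nJ => //; rewrite setU1r.
move=> k kQ; rewrite leqNgt; apply/negP=> lt.
have kj : k != j by apply: contraTneq lt => ->; rewrite ltnn.
move: kQ; rewrite inQset; case: ifP => kI.
  move=> h; have : k \in Qset (j |: I).
    rewrite inQset setU1r //; apply: indec_sub h; apply/subsetP=> x.
    by rewrite !(in_setD1, in_setU1) => /andP[-> ->]; rewrite orbT.
  by move/jmin; rewrite leqNgt lt.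
move=> Hk.
have kQ' : k \in Qset I by rewrite inQset kI.
have kJ : k \notin j |: I by rewrite in_setU1 (negbTE kj) kI.
have : k \in Qset (j |: I).
  apply: QsetOutI => // i iJ ik; apply/negP=> X.
  have ij : (i < j)%N by apply: ltn_trans lt.
  have iI0 : i \in I by move: iJ; rewrite in_setU1 => /orP[/eqP e|//]; move: ij; rewrite e ltnn.
  have A : ~~ ind ((k |: I) :\ i) := QsetOut (negbT kI) kQ' iI0 ik.
  have B := nJ i iJ ij.
  have [u1 [v1 [e1 n1]]] := nindecP A.
  have [u2 [v2 [e2 n2]]] := nindecP B.
  have [m1 m1X c1] := covP X e1.
  have [m1' m1I c1'] := covP iI e1.
  have [m2 m2X c2] := covP X e2.
  have [m2' m2I c2'] := covP iI e2.
  have m1j : m1 = j.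
    apply/eqP; move: m1X (contraTN (n1 m1) c1); rewrite !(in_setD1, in_setU1).
    by case: (m1 == j) => //=; case: (m1 == i) => //=; case: (m1 == k) => //=; case: (m1 \in I) => //=.
  have m1'i : m1' = i.
    apply/eqP; move: m1I (contraTN (n1 m1') c1'); rewrite !(in_setD1, in_setU1).
    by case: (m1' == i) => //=; case: (m1' == k) => //=; case: (m1' \in I) => //=.
  have m2k : m2 = k.
    apply/eqP; move: m2X (contraTN (n2 m2) c2); rewrite !(in_setD1, in_setU1).
    by case: (m2 == k) => //=; case: (m2 == i) => //=; case: (m2 == j) => //=; case: (m2 \in I) => //=.
  have m2'i : m2' = i.
    apply/eqP; move: m2I (contraTN (n2 m2') c2'); rewrite !(in_setD1, in_setU1).
    by case: (m2' == i) => //=; case: (m2' == j) => //=; case: (m2' \in I) => //=.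
  subst m1 m1' m2 m2'.
  case/andP: c1 => u1j v1j; case/andP: c1' => u1i v1i.
  case/andP: c2 => u2k v2k; case/andP: c2' => u2i v2i.
  have u1k := anickE ik lt u2i u2k u1i u1j.
  have v1k := anickE ik lt u2i u2k v1i v1j.
  have kneqi : k != i by apply: contraTneq ik => ->; rewrite ltnn.
  by have := n1 k; rewrite u1k v1k !(in_setD1, in_setU1) eqxx kneqi /= => /(_ isT).
by move/jmin; rewrite leqNgt lt.
Qed.

Lemma M3 I j i j' : ind I -> Qo I = Some j -> j \notin I -> i \in I ->
  ind ((j |: I) :\ i) -> Qo ((j |: I) :\ i) = Some j' -> j' \notin (j |: I) :\ i ->
  (j < j')%N.
Proof.
move=> iI QI jI iI0 iB QB j'B.
have [jQ jmin] := QoSome QI; have [j'Q j'min] := QoSome QB.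
have ij : i != j by apply: contraNneq jI => <-.
have ji : (j < i)%N.
  case: (ltngtP j i) => // [lt|e]; last by move: ij; rewrite (val_inj e) eqxx.
  by have := QsetOut jI jQ iI0 lt; rewrite iB.
have jB : j \in (j |: I) :\ i by rewrite in_setD1 setU11 eq_sym ij.
case: (ltngtP j j') => // [lt|e]; last by move: j'B; rewrite -(val_inj e) jB.
exfalso.
have j'i : j' != i by apply: contraTneq lt => ->; rewrite -leqNgt ltnW.
have j'j : j' != j by apply: contraTneq lt => ->; rewrite ltnn.
have j'I : j' \notin I by move: j'B; rewrite !in_setD1 in_setU1 j'i (negbTE j'j).
have : j' \in Qset I.
  apply: QsetOutI => // k kI kj'; apply/negP=> Dk.
  have kj : (k < j)%N by apply: ltn_trans lt.
  have ki : (k < i)%N by apply: ltn_trans ji.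
  have kB : k \in (j |: I) :\ i.
    by rewrite in_setD1 setU1r // andbT; apply: contraTneq ki => ->; rewrite ltnn.
  have A := QsetOut j'B j'Q kB kj'.
  have B' := QsetOut jI jQ kI kj.
  have [u1 [v1 [e1 n1]]] := nindecP A.
  have [u2 [v2 [e2 n2]]] := nindecP B'.
  have [m1 m1D c1] := covP Dk e1.
  have [m1' m1B c1'] := covP iB e1.
  have [m2 m2I c2] := covP iI e2.
  have [m2' m2D c2'] := covP Dk e2.
  have m1i : m1 = i.
    apply/eqP; move: m1D (contraTN (n1 m1) c1); rewrite !(in_setD1, in_setU1).
    by case: (m1 == i) => //=; case: (m1 == k) => //=; case: (m1 == j') => //=; case: (m1 == j) => //=; case: (m1 \in I) => //=.
  have m1'k : m1' = k.
    apply/eqP; move: m1B (contraTN (n1 m1') c1'); rewrite !(in_setD1, in_setU1).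
    by case: (m1' == k) => //=; case: (m1' == i) => //=; case: (m1' == j') => //=; case: (m1' == j) => //=; case: (m1' \in I) => //=.
  have m2k : m2 = k.
    apply/eqP; move: m2I (contraTN (n2 m2) c2); rewrite !(in_setD1, in_setU1).
    by case: (m2 == k) => //=; case: (m2 == j) => //=; case: (m2 \in I) => //=.
  have m2'j' : m2' = j'.
    apply/eqP; move: m2D (contraTN (n2 m2') c2'); rewrite !(in_setD1, in_setU1).
    by case: (m2' == j') => //=; case: (m2' == k) => //=; case: (m2' == j) => //=; case: (m2' \in I) => //=.
  subst m1 m1' m2 m2'.
  case/andP: c1 => u1i v1i; case/andP: c1' => u1k v1k.
  case/andP: c2 => u2k v2k; case/andP: c2' => u2j' v2j'.
  have kj'i : (j' < i)%N by apply: ltn_trans ji.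
  have u1j' := anickE kj' kj'i u2k u2j' u1k u1i.
  have v1j' := anickE kj' kj'i u2k u2j' v1k v1i.
  have kneqj : j' != k by apply: contraTneq kj' => ->; rewrite ltnn.
  by have := n1 j'; rewrite u1j' v1j' !(in_setD1, in_setU1) eqxx kneqj /= => /(_ isT).
by move/jmin; rewrite leqNgt lt.
Qed.
End Comb.

Section DD.
Variables (F : fieldType) (Gen : Type) (t : tmon Gen) (S : seq {set 'I_(nnodes t)}).
Local Notation p := (size S).
Local Notation ind := (@indec _ _ S).
Implicit Types (I J A C : {set 'I_p}) (i j k : 'I_p).

Definition sgn A i : F := (-1) ^+ #|[set j in A | (j < i)%N]|.

Lemma sgn_neq0 A i : sgn A i != 0.
Proof. by rewrite /sgn expf_neq0 // oppr_eq0 oner_neq0. Qed.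

Lemma dcoef_nz I J : dcoef F I J != 0 -> exists2 i, i \in I & J = I :\ i.
Proof.
case: (boolP [exists i in I, J == I :\ i]).
  by case/existsP=> i /andP[iI /eqP ->] _; exists i.
move/existsPn=> H; rewrite /dcoef big_pred0 ?eqxx // => i.
by have := H i; rewrite negb_and => /orP[/negbTE -> | /negbTE ->]; rewrite ?andbF.
Qed.

Lemma dcoef_del I i : i \in I -> dcoef F I (I :\ i) = sgn I i.
Proof.
move=> iI; rewrite /dcoef (big_pred1 i) // => i' /=.
case: (eqVneq i' i) => [->|ne]; first by rewrite iI eqxx.
apply/negbTE; rewrite negb_and; case: (boolP (i' \in I)) => //= i'I.
apply/eqP=> e; have : i' \in I :\ i by rewrite in_setD1 ne.
by rewrite e in_setD1 eqxx.
Qed.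

Lemma sgn_swap A i k : i \in A -> k \in A -> (i < k)%N ->
  sgn A i * sgn (A :\ i) k = - (sgn A k * sgn (A :\ k) i).
Proof.
move=> iA kA ik.
have e1 : [set j in A | (j < k)%N] = i |: [set j in A :\ i | (j < k)%N].
  apply/setP=> j; rewrite !inE; case: (eqVneq j i) => [->|]; by rewrite ?iA ?ik.
have ni : i \notin [set j in A :\ i | (j < k)%N] by rewrite !inE eqxx.
have e2 : [set j in A :\ k | (j < i)%N] = [set j in A | (j < i)%N].
  apply/setP=> j; rewrite !inE; case: (eqVneq j k) => [->|] //=.
  by rewrite ltnNge (ltnW ik) andbF.
by rewrite /sgn e2 e1 cardsU1 ni /= exprS mulN1r mulNr opprK mulrC.
Qed.

Lemma dmatrix_sq : dmatrix S F *m dmatrix S F = 0.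
Proof.
apply/matrixP=> a c; rewrite !mxE.
set A := enum_val a; set C := enum_val c.
have CK : C \in indecs S by exact: enum_valP.
rewrite (eq_bigr (fun b => dcoef F A (enum_val b) * dcoef F (enum_val b) C)); last first.
  by move=> b _; rewrite !mxE.
rewrite -(big_enum_val (fun B => dcoef F A B * dcoef F B C)) /=.
rewrite big_mkcond /=.
rewrite (eq_bigr (fun B => dcoef F A B * dcoef F B C)); last first.
  move=> B _; case: ifP => // /negbT nK.
  have [->|nz] := eqVneq (dcoef F B C) 0; first by rewrite mulr0.
  have [k kB eC] := dcoef_nz nz; case/negP: nK; rewrite inE.
  have := CK; rewrite inE eC; apply: indec_sub; exact: subD1set.
rewrite (eq_bigr (fun B => \sum_(i in A) (if B == A :\ i then sgn A i * dcoef F B C else 0))); last first.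
  move=> B _; rewrite /dcoef big_mkcondr mulr_suml /=; apply: eq_bigr => i _.
  by case: ifP; rewrite ?mul0r.
rewrite exchange_big /=.
rewrite (eq_bigr (fun i => sgn A i * dcoef F (A :\ i) C)); last first.
  by move=> i _; rewrite -big_mkcond /= big_pred1_eq.
rewrite (eq_bigr (fun i => \sum_(k in A :\ i | C == A :\ i :\ k) sgn A i * sgn (A :\ i) k)); last first.
  by move=> i _; rewrite /dcoef mulr_sumr.
rewrite pair_big_dep /=.
rewrite (bigID (fun q : 'I_p * 'I_p => (q.1 < q.2)%N)) /=.
have sw : injective (fun q : 'I_p * 'I_p => (q.2, q.1)) by move=> [x y] [x' y'] /= [-> ->].
rewrite [X in _ + X](reindex_inj sw) /=.
rewrite [X in _ + X](eq_bigl (fun q : 'I_p * 'I_p => [&& q.1 \in A, q.2 \in A :\ q.1 & C == A :\ q.1 :\ q.2] && (q.1 < q.2)%N)); last first.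
  move=> [i k] /=; rewrite !in_setD1.
  have eAA : A :\ k :\ i = A :\ i :\ k by rewrite !setDDl setUC.
  rewrite eAA; case: (ltngtP i k) => [lt|lt|e].
  - have nik : i != k by apply: contraTneq lt => ->; rewrite ltnn.
    by rewrite nik (eq_sym k i) nik /=; case: (i \in A); case: (k \in A).
  - by rewrite !andbF.
  - by rewrite (val_inj e) eqxx /= !andbF.
rewrite -big_split /= big1 // => [[i k]] /=.
case/andP=> /and3P[iA kA eC] ik.
have kA' : k \in A by move: kA; rewrite in_setD1 => /andP[].
by rewrite sgn_swap // addrC subrr.
Qed.
End DD.

Section Main.
Variables (F : fieldType) (Gen : Type) (t : tmon Gen) (S : seq {set 'I_(nnodes t)}).
Hypothesis hA : anick S.
Local Notation p := (size S).
Local Notation ind := (@indec _ _ S).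
Local Notation n := #|indecs S|.
Local Notation ev := (@enum_val _ (mem (indecs S))).

Definition crit (a : 'I_n) : bool := Qset (ev a) == set0.
Definition upc (a : 'I_n) : bool := if Qo (ev a) is Some j then j \in ev a else false.
Definition levc (a : 'I_n) : nat := if Qo (ev a) is Some j then val j else 0%N.
Definition tog (a : 'I_n) : {set 'I_p} :=
  if Qo (ev a) is Some j then (if j \in ev a then ev a :\ j else j |: ev a) else ev a.
Definition mate (a : 'I_n) : 'I_n := enum_rank_in (enum_valP a) (tog a).

Lemma evK (a : 'I_n) x : x \in indecs S -> ev (enum_rank_in (enum_valP a) x) = x.
Proof. by move=> h; rewrite enum_rankK_in. Qed.

Lemma ev_ind (a : 'I_n) : ind (ev a).
Proof. by have := enum_valP a; rewrite inE. Qed.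

Lemma crit_Some a : ~~ crit a -> exists j, Qo (ev a) = Some j.
Proof.
rewrite /crit; case e: (Qo (ev a)) => [j|]; first by exists j.
by rewrite (QoNone e) eqxx.
Qed.

Lemma Some_crit a j : Qo (ev a) = Some j -> ~~ crit a.
Proof.
move/QoSome=> [jQ _]; rewrite /crit; apply/set0Pn; by exists j.
Qed.

Lemma mate_up a j : Qo (ev a) = Some j -> j \in ev a ->
  ev (mate a) = ev a :\ j /\ Qo (ev (mate a)) = Some j.
Proof.
move=> Qa ja.
have e : j |: (ev a :\ j) = ev a by rewrite setD1K.
have i1 : ind (j |: (ev a :\ j)) by rewrite e; exact: ev_ind.
have q1 : Qo (j |: (ev a :\ j)) = Some j by rewrite e.
have [iI QI] := M2 hA (negbT (setD11 j (ev a))) i1 q1.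
have ee : ev (mate a) = ev a :\ j by rewrite /mate evK /tog Qa ja // inE.
by rewrite ee.
Qed.

Lemma mate_low a j : Qo (ev a) = Some j -> j \notin ev a ->
  ev (mate a) = j |: ev a /\ Qo (ev (mate a)) = Some j.
Proof.
move=> Qa ja.
have [iJ QJ] := M1 (ev_ind a) Qa ja.
have ee : ev (mate a) = j |: ev a by rewrite /mate evK /tog Qa (negbTE ja) // inE.
by rewrite ee.
Qed.

Lemma H1c a b : crit a -> dmatrix S F a b = 0.
Proof.
move=> ca; rewrite mxE; apply/eqP; apply: contraTT ca => /dcoef_nz[i ia eb].
rewrite /crit; apply/set0Pn; exists i; rewrite inQset ia -eb; exact: ev_ind.
Qed.

Lemma H2c a : ~~ crit a -> [/\ mate (mate a) = a, upc (mate a) = ~~ upc a & ~~ crit (mate a)].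
Proof.
move=> /crit_Some[j Qa].
case: (boolP (j \in ev a)) => ja.
  have [e1 Q1] := mate_up Qa ja.
  have ja' : j \notin ev (mate a) by rewrite e1 setD11.
  have [e2 Q2] := mate_low Q1 ja'.
  split; last exact: Some_crit Q1.
    by apply: enum_val_inj; rewrite e2 e1 setD1K.
  by rewrite /upc Q1 Qa ja (negbTE ja').
have [e1 Q1] := mate_low Qa ja.
have ja' : j \in ev (mate a) by rewrite e1 setU11.
have [e2 Q2] := mate_up Q1 ja'.
split; last exact: Some_crit Q1.
  by apply: enum_val_inj; rewrite e2 e1 setU1K.
by rewrite /upc Q1 Qa ja ja'.
Qed.

Lemma upc_Some u : upc u -> exists2 j, Qo (ev u) = Some j & j \in ev u.
Proof. by rewrite /upc; case: (Qo (ev u)) => // j ju; exists j. Qed.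

Lemma H3c u : ~~ crit u -> upc u -> dmatrix S F u (mate u) != 0.
Proof.
move=> _ /upc_Some[j Qu ju]; have [e1 _] := mate_up Qu ju.
by rewrite mxE e1 dcoef_del // sgn_neq0.
Qed.

Lemma H4c u b : ~~ crit u -> upc u -> dmatrix S F u b != 0 -> b != mate u ->
  ~~ crit b -> ~~ upc b -> (levc (mate u) < levc b)%N.
Proof.
move=> _ /upc_Some[j Qu ju]; have [e1 Q1] := mate_up Qu ju.
rewrite mxE => /dcoef_nz[i iu eb] bm /crit_Some[j' Qb] ub.
have j'b : j' \notin ev b by move: ub; rewrite /upc Qb.
rewrite /levc Q1 Qb.
have ij : i != j.
  apply: contraNneq bm => eij; apply/eqP; apply: enum_val_inj; by rewrite e1 eb eij.
have iI : i \in ev u :\ j by rewrite in_setD1 ij.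
have eu : j |: (ev u :\ j) = ev u by rewrite setD1K.
have Qm : Qo (ev u :\ j) = Some j by rewrite -e1.
have indI : ind (ev u :\ j) by rewrite -e1 ev_ind.
apply: (M3 hA indI Qm (negbT (setD11 _ _)) iI); rewrite eu -eb //; exact: ev_ind.
Qed.

Lemma critE (I : {set 'I_p}) : (propI I && propII I) = (Qset I == set0).
Proof.
apply/idP/idP.
  case/andP=> /forallP h1 /forallP h2; apply/eqP/setP=> j; rewrite inQset in_set0.
  case: ifP => jI.
    by have := h1 j; rewrite jI /= => /negbTE.
  have := h2 j; rewrite inE jI /= => /existsP[i /and3P[iI lt id]].
  apply/negbTE/forallPn; exists i; by rewrite iI lt id.
move/eqP=> Q0; apply/andP; split; apply/forallP=> j; apply/implyP=> jI.
  have jn : (j \in Qset I) = false by rewrite Q0 in_set0.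
  by move: jn; rewrite inQset jI => ->.
have : (j \in Qset I) = false by rewrite Q0 in_set0.
rewrite inQset; rewrite inE in jI; rewrite (negbTE jI).
move/negbT/forallPn=> [i]; rewrite negb_imply negb_imply negbK => /andP[iI /andP[lt id]].
by apply/existsP; exists i; rewrite iI lt id.
Qed.

Lemma card_crit : #|[set a | crit a]| = #|critical S|.
Proof.
rewrite -(card_imset _ (@enum_val_inj _ (mem (indecs S)))).
suff -> : [set ev a | a in [set a | crit a]] = critical S by [].
apply/setP=> I; apply/imsetP/idP.
  case=> a; rewrite inE => ca ->; rewrite /critical inE enum_valP /= critE; exact: ca.
rewrite /critical inE => /andP[IK cI]; exists (enum_rank_in IK I).
  by rewrite inE /crit enum_rankK_in // -critE.
by rewrite enum_rankK_in.
Qed.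

Lemma main_hom : homology_dim S F = #|critical S|.
Proof.
rewrite /homology_dim -card_crit.
exact: (morse_rank (dmatrix_sq F S) (@H1c) H2c H3c H4c).
Qed.
End Main.

Theorem mainTheorem3 (F : fieldType) (Gen : Type) (arity : Gen -> nat)
    (G : tmon Gen -> Prop)
    (num : forall T : tmon Gen, seq {set 'I_(nnodes T)}) :
  (forall T : tmon Gen, wf_tmon arity T ->
     relation_numbering G (num T) /\ anick (num T)) ->
  forall T : tmon Gen, wf_tmon arity T ->
    homology_dim (num T) F = #|critical (num T)|.
Proof.
move=> H T wT; have [_ hA] := H T wT.
exact: main_hom hA.
Qed.
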